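(* Let $G$ be a cop-win graph of corner rank $\alpha\ge2$. No vertex of corner rank $\alpha-1$ is adjacent to every vertex of corner rank $\alpha-1$.
   Context: All graphs are finite, nonempty, and reflexive (every vertex has a loop, so each vertex is adjacent to itself). $N[v]$ is the closed neighborhood of $v$ (including $v$). For distinct $v,w$, $w$ strictly corners $v$ if $N[v]\subsetneq N[w]$; $v$ is then a strict corner. Corner ranking: set $G^{(1)}=G$, $k=1$. If $G^{(k)}$ is a clique, give all its vertices rank $k$ and stop. Else if $G^{(k)}$ has no strict corners, give all its vertices rank $\infty$ and stop. Else give every strict corner of $G^{(k)}$ rank $k$, delete them to get $G^{(k+1)}$ (induced subgraph), increase $k$ and repeat. The corner rank of $G$ is the largest rank of a vertex; cop-win graphs are exactly those of finite corner rank. *)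

(* Defs.v *)
(* A finite reflexive graph is a finType T (nonempty) with a
   reflexive symmetric adjacency relation e : rel T. *)
From mathcomp Require Import all_boot.
Set Implicit Arguments. Unset Strict Implicit. Unset Printing Implicit Defensive.

Section CornerRank.
Variables (T : finType) (e : rel T).

Definition nbhd (S : {set T}) (v : T) : {set T} := [set w in S | e v w].

Definition strict_corner (S : {set T}) (v : T) : bool :=
  (v \in S) && [exists w in S, (w != v) && (nbhd S v \proper nbhd S w)].

Definition strict_corners (S : {set T}) : {set T} :=
  [set v in S | strict_corner S v].

Definition is_clique (S : {set T}) : bool :=
  [forall u in S, forall v in S, e u v].

(* stage k = vertex set of G^(k+1): G^(1) = G, G^(k+1) = G^(k) minus its
   strict corners.  Once the procedure stops (clique, or no strict corners)
   the sequence becomes constant, as no strict corners are deleted. *)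
Fixpoint stage (k : nat) : {set T} :=
  if k is k'.+1 then stage k' :\: strict_corners (stage k') else [set: T].

(* Gk k = G^(k) for k >= 1 *)
Definition Gk (k : nat) : {set T} := stage k.-1.

Definition has_rank (v : T) (k : nat) : Prop :=
  [/\ 1 <= k, v \in Gk k,
      (forall j, 1 <= j < k -> ~~ is_clique (Gk j)) &
      (is_clique (Gk k) \/ strict_corner (Gk k) v)].

Definition corner_rank_eq (alpha : nat) : Prop :=
  [/\ forall v, exists k, has_rank v k,
      exists v, has_rank v alpha &
      forall v k, has_rank v k -> k <= alpha].

(* cop-win (equivalently, by the standing context, finite corner rank) *)
Definition cop_win : Prop := forall v, exists k, has_rank v k.

End CornerRank.

(* Main.v *)
Require Import Defs.
From mathcomp Require Import all_boot.
From mathcomp Require Import zify.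

Lemma stage_mono {T : finType} {e : rel T} {m n} :
  m <= n -> stage e n \subset stage e m.
Proof.
move=> /subnK <-; elim: (n - m) => [|d IH] //=.
rewrite ?addSn /=; apply: subset_trans IH; exact: subsetDl.
Qed.

Lemma nbhd_sub (T : finType) (e : rel T) S v : nbhd e S v \subset S.
Proof. by apply/subsetP => y; rewrite inE => /andP[]. Qed.

Theorem lemma3p18 (T : finType) (e : rel T) (x0 : T)
    (e_refl : reflexive e) (e_sym : symmetric e)
    (alpha : nat) (hcw : cop_win e) (hrank : corner_rank_eq e alpha)
    (halpha : 2 <= alpha) :
  ~ (exists u, has_rank e u alpha.-1 /\
       forall w, has_rank e w alpha.-1 -> e u w).
Proof.
move=> [u [hu hall]].
case: hrank => _ [v0 hv0] hmax.
case: hv0 => _ hv0G hnc _.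
set S := Gk e alpha.-1.
have SnC : ~~ is_clique e S by apply: hnc; lia.
have rankC : forall x, has_rank e x alpha.-1 <-> strict_corner e S x.
  move=> x; split.
    by case=> _ _ _ [h|//]; rewrite h in SnC.
  move=> hx; split; [lia | by case/andP: hx | move=> j hj; apply: hnc; lia | by right].
have KE : forall a, 2 <= a -> Gk e a = Gk e a.-1 :\: strict_corners e (Gk e a.-1).
  by case=> [|[|a]].
set K := Gk e alpha.
have Kcl : is_clique e K.
  apply/negPn/negP => Knc.
  have v0K : v0 \in K := hv0G.
  pose x := [arg max_(y > v0 in K) #|nbhd e K y|].
  have [xK xmax] : x \in K /\ forall y, y \in K -> #|nbhd e K y| <= #|nbhd e K x|.
    by rewrite /x; case: arg_maxnP.
  have ncx : ~~ strict_corner e K x.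
    apply/negP=> /andP[_ /existsP[w /andP[wK /andP[_ hp]]]].
    have := proper_card hp; have := xmax w wK; lia.
  have [k hk] := hcw x.
  have kle := hmax _ _ hk.
  case: hk => k1 xk knc kcase.
  case: (ltngtP k alpha) => [klt | kgt | keq].
  - case: kcase => [kc | ksc].
      by move: (hnc k); rewrite kc; move=> /(_ _)/negP; apply; lia.
    have : x \in stage e k.
      have kle' : k <= alpha.-1 by lia.
      exact: (subsetP (stage_mono kle') _ xK).
    move: ksc; rewrite /Gk -(prednK k1) /= => ksc.
    by rewrite inE inE ksc andbT; case/andP: ksc => -> _.
  - lia.
  - subst k; case: kcase => [kc | ksc].
      by rewrite kc in Knc.
    by rewrite ksc in ncx.
have Key : forall n u, #|S| - #|nbhd e S u| = n -> strict_corner e S u ->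
    (forall c, strict_corner e S c -> e u c) -> False.
  elim/ltn_ind => n IH u' hn hu' hall'.
  case/andP: (hu') => uS /existsP[w /andP[wS /andP[wu hp]]].
  case hwC: (strict_corner e S w).
    apply: (IH _ _ w erefl hwC).
      have := proper_card hp; have := subset_leq_card (nbhd_sub _ e S w); lia.
    move=> c hc; have : c \in nbhd e S u'.
      by rewrite inE hall' // andbT; case/andP: hc.
    by move/(subsetP (proper_sub hp)); rewrite inE => /andP[].
  have wK : w \in K by rewrite /K KE // inE inE hwC wS.
  have cl : forall y z, y \in K -> z \in K -> e y z.
    move=> y z yK zK.
    by move/forallP: Kcl => /(_ y) /implyP /(_ yK) /forallP /(_ z) /implyP /(_ zK).
  have nwS : nbhd e S w = S.
    apply/setP=> y; rewrite inE; case yS: (y \in S) => //=.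
    case hyC: (strict_corner e S y).
      have : y \in nbhd e S u' by rewrite inE yS hall'.
      by move/(subsetP (proper_sub hp)); rewrite inE => /andP[].
    by apply: cl => //; rewrite /K KE // inE inE hyC yS.
  have nuS : nbhd e S u' = S.
    apply/setP=> y; rewrite inE; case yS: (y \in S) => //=.
    case hyC: (strict_corner e S y); first by apply: hall'.
    suff nyS : nbhd e S y = S.
      have : u' \in nbhd e S y by rewrite nyS.
      by rewrite inE e_sym => /andP[].
    case: (y =P w) => [->//|ynw].
    apply/eqP; apply: contraFT hyC => hne.
    rewrite /strict_corner yS; apply/existsP; exists w.
    rewrite wS /= nwS properEneq hne nbhd_sub andbT.
    by rewrite andbT; apply/eqP => h; apply: ynw.
  by move: hp; rewrite nuS nwS properxx.
apply: (Key _ u erefl); first by apply/rankC.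
by move=> c /rankC hc; apply: hall.
Qed.
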